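(* As formal power series, $$\sum_{n=1}^{\infty}x^{e(n)}=\frac{1}{1-3x}.$$ Equivalently, for every integer $k\ge 0$, the number of positive integers $i$ with $e(i)=k$ is exactly $3^{k}$.
   Context: The Stern polynomials $B_n(t)\in\mathbb{Z}[t]$, $n\ge 0$, are defined by $B_0(t)=0$, $B_1(t)=1$, $B_{2n}(t)=tB_n(t)$ and $B_{2n+1}(t)=B_n(t)+B_{n+1}(t)$ for $n\ge 1$. For $n\ge 1$, $e(n)=\deg_t B_n(t)$. *)

(* Defs.v *)
From HB Require Import structures.
From mathcomp Require Import all_boot all_order all_algebra.
From Stdlib Require Import Lia.
Set Implicit Arguments. Unset Strict Implicit. Unset Printing Implicit Defensive.
Import GRing.Theory.
Local Open Scope ring_scope.

(* Stern polynomials B_n(t) in Z[t], computed with fuel (fuel n suffices for B_n):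
   B_0 = 0, B_1 = 1, B_{2m} = t B_m, B_{2m+1} = B_m + B_{m+1}. *)
Fixpoint stern_aux (f n : nat) : {poly int} :=
  match f with
  | 0 => 0
  | f'.+1 =>
    if n is 0 then 0 else
    if n == 1%N then 1 else
    if odd n then stern_aux f' n./2 + stern_aux f' (n./2).+1
    else 'X * stern_aux f' n./2
  end.

Definition stern (n : nat) : {poly int} := stern_aux n n.

(* e(n) = deg_t B_n(t)  (size p = deg p + 1 for p != 0) *)
Definition e (n : nat) : nat := (size (stern n)).-1.

Lemma half_le n : (n.+1./2 <= n)%N.
Proof.
have := odd_double_half n.+1; move: (n.+1./2) (odd n.+1) => h b.
rewrite -muln2 => E; apply/leP; case: b E => /= E;
  rewrite -?(add1n, add0n) -?multE -?plusE in E; lia.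
Qed.

Lemma half_lt n : n <> 0%N -> odd n.+1 -> ((n.+1./2).+1 <= n)%N.
Proof.
move=> n0 od; have := odd_double_half n.+1; rewrite od.
move: (n.+1./2) => h; rewrite -muln2 add1n => E; apply/leP; rewrite -?multE in E; lia.
Qed.

Lemma stern_aux_fuel f g n :
  (n <= f)%N -> (n <= g)%N -> stern_aux f n = stern_aux g n.
Proof.
elim: f g n => [|f IH] [|g] [|n] //= hf hg.
case: n hf hg => [|n] //= hf hg; have n0 : n.+1 <> 0%N by [].
have h2 : (n.+2./2 <= f)%N by apply: leq_trans (half_le n.+1) _.
have h2' : (n.+2./2 <= g)%N by apply: leq_trans (half_le n.+1) _.
case: ifP => od.
  have h3 := half_lt n0 od.
  by rewrite (IH g) ?(IH g (n.+2./2).+1) //; apply: leq_trans h3 _.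
by rewrite (IH g).
Qed.

Lemma stern0 : stern 0 = 0. Proof. by []. Qed.
Lemma stern1 : stern 1 = 1. Proof. by []. Qed.

Lemma stern_aux_S f n : stern_aux f.+1 n =
  if n is 0 then 0 else
  if n == 1%N then 1 else
  if odd n then stern_aux f n./2 + stern_aux f (n./2).+1
  else 'X * stern_aux f n./2.
Proof. by []. Qed.

Lemma stern_even n : (0 < n)%N -> stern n.*2 = 'X * stern n.
Proof.
case: n => [//|n] _; rewrite /stern doubleS stern_aux_S.
have E : (n.*2.+2 == 1%N) = false by [].
have O : odd n.*2.+2 = false by rewrite /= odd_double.
rewrite E O -doubleS doubleK (@stern_aux_fuel _ n.+1) //.
by rewrite -addnn -addnS leq_addl.
Qed.

Lemma stern_odd n : (0 < n)%N -> stern n.*2.+1 = stern n + stern n.+1.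
Proof.
case: n => [//|n] _; rewrite /stern doubleS stern_aux_S.
have E : (n.*2.+3 == 1%N) = false by [].
have O : odd n.*2.+3 = true by rewrite /= odd_double.
have H : n.*2.+3./2 = n.+1 by rewrite -[n.*2.+3]/((n.+1).*2.+1) -[X in X./2]addn1 halfD odd_double /= addn0 doubleK.
rewrite E O H (@stern_aux_fuel _ n.+1) ?(@stern_aux_fuel _ n.+2) //;
  rewrite -addnn -?addnS ?leq_addl //.
by rewrite addnS ltnS leq_addr.
Qed.

(* Main.v *)
Require Import Defs.
From HB Require Import structures.
From mathcomp Require Import all_boot all_order all_algebra.
From mathcomp Require Import zify.
Import Order.TTheory GRing.Theory Num.Theory.

Section Poly.
Local Open Scope ring_scope.

Definition nneg (p : {poly int}) := forall i, 0 <= p`_i.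

Lemma size_addnn (p q : {poly int}) : nneg p -> nneg q ->
  size (p + q) = maxn (size p) (size q).
Proof.
move=> hp hq; apply/eqP; rewrite eqn_leq size_polyD /=.
have key : forall a b : {poly int}, nneg a -> nneg b -> (size a <= size (a + b)%R)%N.
  move=> a b ha hb; have [->|a0] := eqVneq a 0; first by rewrite size_poly0.
  rewrite leqNgt; apply/negP => H.
  have H' : (size (a + b)%R <= (size a).-1)%N by rewrite -ltnS -(polySpred a0).
  move/leq_sizeP: H' => /(_ _ (leqnn _)); rewrite coefD => /eqP.
  have la : 0 < a`_(size a).-1.
    rewrite lt0r ha andbT -lead_coefE lead_coef_eq0 //.
  have := hb (size a).-1; move: la; set x := a`_ _; set y := b`_ _ => lx ly.
  by rewrite gt_eqF // ltr_wpDr.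
by rewrite geq_max key // addrC key.
Qed.

Lemma stern_nneg n : nneg (stern n) /\ (0 < n)%N -> True. Proof. by []. Qed.

Lemma stern_prop n : nneg (stern n) /\ ((0 < n)%N -> stern n != 0).
Proof.
elim/ltn_ind: n => n IH.
case: n IH => [|n] IH.
  by split => // i; rewrite stern0 coef0.
case: n IH => [|n] IH.
  have -> : stern 1 = 1%:P by rewrite stern1.
  split; last by rewrite polyC_eq0.
  by move=> i; rewrite coefC; case: (i == 0)%N.
have E := odd_double_half n.+2.
have m0 : (0 < n.+2./2)%N by [].
move: E m0; set h := n.+2./2; set N := n.+2; rewrite -muln2.
case: (odd N) => E m0.
- have lt1 : (h < N)%N by rewrite /N; lia.
  have lt2 : (h.+1 < N)%N by rewrite /N; lia.
  move: (IH _ lt1) (IH _ lt2) => [h1 z1] [h2 z2].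
  have -> : N = h.*2.+1 by rewrite -muln2; lia.
  rewrite stern_odd //; split.
    by move=> i; rewrite coefD addr_ge0.
  move=> _; rewrite -size_poly_gt0 size_addnn //.
  by rewrite (leq_trans _ (leq_maxl _ _)) // size_poly_gt0 z1.
- have lt1 : (h < N)%N by rewrite /N; lia.
  move: (IH _ lt1) => [h1 z1].
  have -> : N = h.*2 by rewrite -muln2; lia.
  rewrite stern_even //; split.
    move=> i; rewrite mulrC coefMX; case: (i == 0)%N => //.
  by move=> _; rewrite mulf_neq0 ?polyX_eq0 ?z1.
Qed.

Lemma e_even n : (0 < n)%N -> e n.*2 = (e n).+1.
Proof.
move=> n0; rewrite /e stern_even // mulrC size_mulX; last by case: (stern_prop n) => _ ->.
by rewrite polySpred //; case: (stern_prop n) => _ ->.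
Qed.

Lemma e_odd n : (0 < n)%N -> e n.*2.+1 = maxn (e n) (e n.+1).
Proof.
move=> n0; rewrite /e stern_odd // size_addnn; last 2 first.
- by case: (stern_prop n).
- by case: (stern_prop n.+1).
have := stern_prop n; have := stern_prop n.+1; move=> [_ /(_ isT)] + [_ /(_ n0)].
rewrite -!size_poly_gt0; lia.
Qed.

Lemma e1 : e 1 = 0%N. Proof. by rewrite /e stern1 size_poly1. Qed.
End Poly.

Lemma e2 : e 2 = 1%N. Proof. by rewrite (@e_even 1 isT) e1. Qed.
Lemma e3 : e 3 = 1%N. Proof. by rewrite (@e_odd 1 isT) e1 e2. Qed.

Lemma split2 n : (1 < n)%N ->
  exists2 m, (0 < m)%N & (n = m.*2 \/ n = m.*2.+1).
Proof.
move=> n1; have E := odd_double_half n; exists n./2.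
  move: E n1; rewrite -muln2; move: (n./2) (odd n) => h [] /= E n1.
  - rewrite add1n in E; lia.
  - rewrite add0n in E; lia.
by move: E; case: (odd n) => /= E; [right|left]; rewrite -{1}E ?add0n ?add1n.
Qed.

Lemma e_inv n : (0 < n)%N -> (e n.+1 <= (e n).+1)%N /\ (e n <= (e n.+1).+1)%N.
Proof.
elim/ltn_ind: n => n IH n0.
have [->|n1] := eqVneq n 1%N; first by rewrite e1 e2.
have n2 : (1 < n)%N by lia.
have [m m0 [En|En]] := @split2 _ n2; subst n.
- have lt : (m < m.*2)%N by rewrite -addnn; lia.
  have := IH m lt m0; rewrite e_odd // e_even //; lia.
- have lt : (m < m.*2.+1)%N by rewrite -addnn; lia.
  have := IH m lt m0; rewrite -doubleS e_odd // e_even //; lia.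
Qed.

Lemma e_bound n : (0 < n)%N -> (n < 4 ^ (e n).+1)%N.
Proof.
elim/ltn_ind: n => n IH n0.
have [->|n1] := eqVneq n 1%N; first by rewrite e1.
have n2 : (1 < n)%N by lia.
have [m m0 [En|En]] := @split2 _ n2; subst n.
- have lt : (m < m.*2)%N by rewrite -addnn; lia.
  have := IH m lt m0; rewrite e_even // (expnS _ (e m).+1) -muln2; lia.
- have lt : (m < m.*2.+1)%N by rewrite -addnn; lia.
  rewrite e_odd // expnS.
  set E := maxn (e m) (e m.+1).
  have P := @leq_pexp2l 4 _ E isT.
  have m2 : (1 < m)%N \/ m = 1%N by lia.
  case: m2 => [m2|Em]; last by rewrite /E Em e1 e2.
  have [j j0 [Ej|Ej]] := @split2 _ m2.
  + have ltj : (j < m.*2.+1)%N by rewrite Ej -!muln2; lia.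
    have := IH j ltj j0.
    have : (e m <= E)%N by apply: leq_maxl.
    rewrite Ej e_even // => /P; rewrite -muln2; lia.
  + have ltj : (j.+1 < m.*2.+1)%N by rewrite Ej -!muln2; lia.
    have := IH j.+1 ltj isT.
    have : (e m.+1 <= E)%N by apply: leq_maxr.
    rewrite Ej -doubleS e_even // => /P; rewrite -!muln2; lia.
Qed.

Definition S (f : nat -> nat) N := \sum_(1 <= i < N.+1) f i.

Lemma S_reindex f N : S f N.*2.+1 = (f 1 + \sum_(1 <= m < N.+1) (f m.*2 + f m.*2.+1))%N.
Proof.
rewrite /S; elim: N => [|N IH]; first by rewrite big_nat1 big_geq // addn0.
rewrite doubleS (big_nat_recr N.*2.+3) // (big_nat_recr N.*2.+2) // IH.
rewrite (big_nat_recr N.+1) //= -doubleS; lia.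
Qed.

Lemma S_stab f B N : (0 < B)%N -> (forall i, (B <= i)%N -> f i = 0%N) ->
  (B <= N.+1)%N -> S f N = \sum_(1 <= i < B) f i.
Proof.
move=> B0 hf hN; rewrite /S (big_cat_nat B0 hN) /=.
rewrite [\sum_(B <= i < N.+1) f i]big1_seq ?addn0 // => i.
by rewrite mem_index_iota => /andP[_ /andP[hi _]]; exact: hf.
Qed.

Lemma S_shift f N : S f N.+1 = (f 1 + \sum_(1 <= i < N.+1) f i.+1)%N.
Proof. by rewrite /S big_nat_recl. Qed.

Definition A k N := S (fun i => e i == k) N.
Definition G k N := S (fun i => maxn (e i) (e i.+1) == k) N.

Lemma A_stab k N N' : (4 ^ k.+1 <= N.+1)%N -> (4 ^ k.+1 <= N'.+1)%N -> A k N = A k N'.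
Proof.
move=> h1 h2; have B0 : (0 < 4 ^ k.+1)%N by rewrite expn_gt0.
have hf : forall i, (4 ^ k.+1 <= i)%N -> (e i == k) = 0%N :> nat.
  move=> i hi; case: eqP => // ek.
  have := @e_bound _ (leq_trans B0 hi); rewrite ek; lia.
by rewrite /A (@S_stab _ _ _ B0 hf h1) (@S_stab _ _ _ B0 hf h2).
Qed.

Lemma G_stab k N N' : (4 ^ k.+1 <= N.+1)%N -> (4 ^ k.+1 <= N'.+1)%N -> G k N = G k N'.
Proof.
move=> h1 h2; have B0 : (0 < 4 ^ k.+1)%N by rewrite expn_gt0.
have hf : forall i, (4 ^ k.+1 <= i)%N -> (maxn (e i) (e i.+1) == k) = 0%N :> nat.
  move=> i hi; case: eqP => // ek.
  have i0 : (0 < i)%N := leq_trans B0 hi.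
  have H2 := @e_bound _ i0.
  have H1 : ((e i).+1 <= k.+1)%N by rewrite -ek ltnS leq_maxl.
  have := @leq_pexp2l 4 _ _ isT H1; lia.
by rewrite /G (@S_stab _ _ _ B0 hf h1) (@S_stab _ _ _ B0 hf h2).
Qed.

Lemma A_val k N : (4 ^ k.+1 <= N.+1)%N -> A k N = (3 ^ k)%N.
Proof.
elim: k N => [|k IH] N hN.
  by rewrite (@A_stab 0 N 3) // /A /S (big_nat_recr 3) // (big_nat_recr 2) // big_nat1 e1 e2 e3.
set N0 := (4 ^ k.+2)%N.
have h0 : (4 ^ k.+2 <= N0.*2.+1.+1)%N by rewrite /N0 -addnn; lia.
have h1 : (4 ^ k.+2 <= N0.+1)%N by rewrite /N0; lia.
have h2 : (4 ^ k.+1 <= N0.+1)%N.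
  have := @leq_pexp2l 4 k.+1 k.+2 isT (leqnSn _); rewrite /N0; lia.
have h3 : (4 ^ k.+1 <= N0.+2)%N by lia.
rewrite (@A_stab _ _ _ hN h0) /A S_reindex e1 /=.
rewrite (eq_big_nat _ _ (F2 := fun m => (e m == k) + (maxn (e m) (e m.+1) == k.+1))%N); last first.
  by move=> m /andP[m0 _]; rewrite e_even // e_odd.
rewrite big_split /= -/(S _ N0) -/(A k N0) IH //.
rewrite -/(S _ N0) -/(G k.+1 N0) (@G_stab _ _ _ h1 h0) /G S_reindex e1 e2 /=.
rewrite (eq_big_nat _ _ (F2 := fun m => (e m == k) + (e m.+1 == k))%N); last first.
  move=> m /andP[m0 _]; rewrite -doubleS e_even // e_odd // e_even //.
  move: (@e_inv _ m0) => [H1 H2].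
  have -> : maxn (e m).+1 (maxn (e m) (e m.+1)) = (e m).+1 by lia.
  have -> : maxn (maxn (e m) (e m.+1)) (e m.+1).+1 = (e m.+1).+1 by lia.
  by rewrite !eqSS.
rewrite big_split /= -/(S _ N0) -/(A k N0) IH //.
have := IH N0.+1 h3; rewrite /A S_shift.
rewrite e1 max0n eqSS expnS; move: (\sum_(1 <= i < N0.+1) (e i.+1 == k)) => s.
by case: (0 == k) => /=; lia.
Qed.

Theorem theorem4p1 (k : nat) :
  exists s : seq nat,
    [/\ uniq s, size s = (3 ^ k)%N &
        forall i : nat, (i \in s) = (0 < i)%N && (e i == k)].
Proof.
exists [seq i <- iota 1 (4 ^ k.+1) | e i == k]; split.
- by rewrite filter_uniq // iota_uniq.
- rewrite size_filter -(@A_val k (4 ^ k.+1)) // /A /S -sum1_count.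
  rewrite /index_iota subSS subn0 big_mkcond /=.
  by apply: eq_bigr => i _; case: (e i == k).
- move=> i; rewrite mem_filter mem_iota.
  case ek: (e i == k) => /=; last by rewrite andbF.
  rewrite andbT add1n ltnS; case: (ltnP 0 i) => //= i0.
  move/eqP: ek => ek; have := @e_bound _ i0; rewrite ek => H.
  by rewrite ltnW.
Qed.
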